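(* Let $R$ be a commutative ring with $2\in R^\times$ in which $-1$ is a square. Let $(a,b,c)\in R^3$ be a unimodular row. Then $V(a^2,b,c)=2V(a,b,c)$ in $W_E(R)$.
   Context: A row $(a,b,c)$ is unimodular if $aR+bR+cR=R$. For such a row choose $a',b',c'$ with $aa'+bb'+cc'=1$; the Vaserstein symbol $V(a,b,c)\in W_E(R)$ is the class of $$\begin{pmatrix}0&-a&-b&-c\\ a&0&-c'&b'\\ b&c'&0&-a'\\ c&-b'&a'&0\end{pmatrix},$$ which (by a theorem of Vaserstein) does not depend on the choice of $(a',b',c')$. Here $W_E(R)$ is the elementary symplectic Witt group: with $M\perp N=\begin{pmatrix}M&0\\0&N\end{pmatrix}$, $\psi_2=\begin{pmatrix}0&1\\-1&0\end{pmatrix}$, $\psi_{2r}=\psi_2\perp\psi_{2r-2}$, let $S_{2n}(R)$ be the invertible alternating $2n\times 2n$ matrices of Pfaffian $1$, included in $S_{2n'}(R)$ via $G\mapsto G\perp\psi_{2n'-2n}$, $S(R)=\bigcup S_{2n}(R)$; $G\in S_{2n}(R)$ and $G'\in S_{2m}(R)$ are equivalent iff $G\perp\psi_{2(m+t)}=E^t(G'\perp\psi_{2(n+t)})E$ for some $t$ and some elementary $E\in E_{2(m+n+t)}(R)$; $W_E(R)$ is the set of classes, an abelian group under $\perp$. *)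

(* Defs.v *)
From HB Require Import structures.
From mathcomp Require Import all_boot all_order all_algebra.
Set Implicit Arguments. Unset Strict Implicit. Unset Printing Implicit Defensive.
Import GRing.Theory.
Local Open Scope ring_scope.

Section Defs.
Variable R : comPzRingType.

(* The elementary group E_n(R): products of elementary transvections
   1 + r e_{ij} (i <> j).  (Inverses of transvections are transvections,
   so the monoid generated is the group generated.) *)
Inductive elementary (n : nat) : 'M[R]_n -> Prop :=
| elem1 : elementary 1%:M
| elemT (M : 'M[R]_n) (i j : 'I_n) (r : R) :
    i != j -> elementary M -> elementary (M *m (1%:M + r *: delta_mx i j)).

(* psi k : for k = 2r this is psi_{2r} = psi_2 _|_ ... _|_ psi_2 (r copies),
   written entrywise: entry (2s, 2s+1) = 1, entry (2s+1, 2s) = -1, else 0. *)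
Definition psi (k : nat) : 'M[R]_k :=
  \matrix_(i < k, j < k)
    (if ~~ odd i && (j == i.+1 :> nat) then 1
     else if odd i && (j.+1 == i :> nat) then -1 else 0).

Definition perp (p q : nat) (M : 'M[R]_p) (N : 'M[R]_q) : 'M[R]_(p + q)%N :=
  block_mx M 0 0 N.

Lemma size_eq1 p q t : (p + (q + t) = p + q + t)%N.
Proof. by rewrite addnA. Qed.
Lemma size_eq2 p q t : (q + (p + t) = p + q + t)%N.
Proof. by rewrite addnA (addnC q). Qed.

(* Equivalence in W_E(R): for G of size p = 2n and G' of size q = 2m,
   G _|_ psi_{2(m+t)} = E^T (G' _|_ psi_{2(n+t)}) E with E in E_{2(m+n+t)}. *)
Definition WE_equiv (p q : nat) (G : 'M[R]_p) (G' : 'M[R]_q) : Prop :=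
  exists (t : nat) (E : 'M[R]_(p + q + t.*2)%N),
    elementary E /\
    castmx (size_eq1 p q t.*2, size_eq1 p q t.*2) (perp G (psi (q + t.*2)%N))
    = E^T *m castmx (size_eq2 p q t.*2, size_eq2 p q t.*2)
                    (perp G' (psi (p + t.*2)%N)) *m E.

(* The matrix representing the Vaserstein symbol V(a,b,c), given a',b',c'
   with a a' + b b' + c c' = 1. *)
Definition vmat (a b c a' b' c' : R) : 'M[R]_4 :=
  \matrix_(i < 4, j < 4)
    match nat_of_ord i, nat_of_ord j with
    | 0, 1 => - a | 0, 2 => - b | 0, 3 => - c
    | 1, 0 => a   | 1, 2 => - c' | 1, 3 => b'
    | 2, 0 => b   | 2, 1 => c'   | 2, 3 => - a'
    | 3, 0 => c   | 3, 1 => - b' | 3, 2 => a'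
    | _, _ => 0
    end.

End Defs.

(* Main.v *)
Require Import Defs.
From HB Require Import structures.
From mathcomp Require Import all_boot all_order all_algebra.
From mathcomp Require Import ring.
Set Implicit Arguments. Unset Strict Implicit. Unset Printing Implicit Defensive.
Import GRing.Theory.
Local Open Scope ring_scope.

Section Elem.
Variable R : comPzRingType.

Lemma elem_mul n (A B : 'M[R]_n) : elementary A -> elementary B -> elementary (A *m B).
Proof.
move=> hA; elim=> [|M i j r hij _ IH]; first by rewrite mulmx1.
by rewrite mulmxA; apply: elemT.
Qed.

Lemma elem_T n (i j : 'I_n) (r : R) : i != j -> elementary (1%:M + r *: delta_mx i j).
Proof. by move=> hij; rewrite -[X in elementary X]mul1mx; apply: elemT => //; apply: elem1. Qed.

Lemma elem_blockl m n (A : 'M[R]_m) : elementary A -> elementary (block_mx A 0 0 (1%:M : 'M_n)).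
Proof.
elim=> [|M i j r hij _ IH]; first by rewrite -scalar_mx_block; apply: elem1.
have -> : block_mx (M *m (1%:M + r *: delta_mx i j)) 0 0 (1%:M : 'M_n)
   = block_mx M 0 0 1%:M *m (1%:M + r *: delta_mx (lshift n i) (lshift n j)).
  have E : delta_mx (lshift n i) (lshift n j) = block_mx (delta_mx i j) 0 0 0 :> 'M[R]_(m+n).
    by rewrite delta_mx_ushift delta_mx_lshift block_mxEv row_mx0.
  rewrite E (scalar_mx_block m n 1) scale_block_mx !scaler0 add_block_mx !addr0.
  by rewrite mulmx_block !mulmx0 !mul0mx !addr0 !add0r mulmx1.
by apply: elemT => //; rewrite (inj_eq (@lshift_inj _ _)).
Qed.

Lemma elem_blockr m n (A : 'M[R]_n) : elementary A -> elementary (block_mx (1%:M : 'M_m) 0 0 A).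
Proof.
elim=> [|M i j r hij _ IH]; first by rewrite -scalar_mx_block; apply: elem1.
have -> : block_mx (1%:M : 'M_m) 0 0 (M *m (1%:M + r *: delta_mx i j))
   = block_mx 1%:M 0 0 M *m (1%:M + r *: delta_mx (rshift m i) (rshift m j)).
  have E : delta_mx (rshift m i) (rshift m j) = block_mx 0 0 0 (delta_mx i j) :> 'M[R]_(m+n).
    by rewrite delta_mx_dshift delta_mx_rshift block_mxEv row_mx0.
  rewrite E (scalar_mx_block m n 1) scale_block_mx !scaler0 add_block_mx ?addr0 ?add0r.
  by rewrite mulmx_block !mulmx0 !mul0mx !addr0 !add0r mul1mx.
by apply: elemT => //; rewrite (inj_eq (@rshift_inj _ _)).
Qed.

Lemma elem_block m n (A : 'M[R]_m) (B : 'M[R]_n) :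
  elementary A -> elementary B -> elementary (block_mx A 0 0 B).
Proof.
move=> hA hB.
have -> : block_mx A 0 0 B = block_mx A 0 0 1%:M *m block_mx 1%:M 0 0 B.
  by rewrite mulmx_block !mulmx0 !mul0mx !addr0 !add0r mulmx1 mul1mx.
by apply: elem_mul; [apply: elem_blockl | apply: elem_blockr].
Qed.

Lemma elem_unip n (M : 'M[R]_n) (S : pred 'I_n) :
  (forall i j, ~~ S i || S j -> M i j = 0) -> elementary (1%:M + M).
Proof.
move=> hM.
have key : forall s : seq ('I_n * 'I_n),
    elementary (1%:M + \sum_(x <- s) M x.1 x.2 *: delta_mx x.1 x.2).
  elim=> [|[i j] s IH]; first by rewrite big_nil addr0; apply: elem1.
  rewrite big_cons /=.
  have -> : 1%:M + (M i j *: delta_mx i j + \sum_(x <- s) M x.1 x.2 *: delta_mx x.1 x.2)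
     = (1%:M + \sum_(x <- s) M x.1 x.2 *: delta_mx x.1 x.2) *m (1%:M + M i j *: delta_mx i j).
    rewrite mulmxDr mulmx1 mulmxDl mul1mx.
    have -> : (\sum_(x <- s) M x.1 x.2 *: delta_mx x.1 x.2) *m (M i j *: delta_mx i j) = 0.
      rewrite mulmx_suml big1_seq // => [[k l]] _ /=.
      rewrite -scalemxAl -scalemxAr mul_delta_mx_cond.
      case: (eqVneq l i) => [->|]; last by rewrite /= scaler0 scaler0.
      case hS: (S i).
        by rewrite (hM k i) ?hS ?orbT // !scale0r.
      by rewrite (hM i j) ?hS // scale0r scaler0.
    by rewrite addr0 -addrA; congr (_ + _); rewrite addrC.
  case: (eqVneq i j) => [eij|nij].
    by rewrite -eij (hM i i) ?orNb // scale0r addr0 mulmx1.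
  exact: elemT.
have eqM := matrix_sum_delta M; rewrite pair_bigA /= in eqM.
rewrite [X in 1%:M + X]eqM.
exact: key.
Qed.


Lemma elem_U m n (X : 'M[R]_(m, n)) : elementary (block_mx 1%:M X 0 1%:M : 'M_(m + n)).
Proof.
have -> : block_mx 1%:M X 0 1%:M = 1%:M + block_mx 0 X 0 0 :> 'M[R]_(m + n).
  by rewrite (scalar_mx_block m n 1) add_block_mx !addr0 !add0r.
apply: (@elem_unip _ _ (fun k : 'I_(m + n) => (k < m)%N)) => i j.
rewrite -[i]splitK -[j]splitK; case: (split i) => i'; case: (split j) => j' /=;
  rewrite ?block_mxEul ?block_mxEur ?block_mxEdl ?block_mxEdr ?mxE //=.
by rewrite ltn_ord ltnNge leq_addr.
Qed.

Lemma elem_L m n (Y : 'M[R]_(n, m)) : elementary (block_mx 1%:M 0 Y 1%:M : 'M_(m + n)).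
Proof.
have -> : block_mx 1%:M 0 Y 1%:M = 1%:M + block_mx 0 0 Y 0 :> 'M[R]_(m + n).
  by rewrite (scalar_mx_block m n 1) add_block_mx !addr0 !add0r.
apply: (@elem_unip _ _ (fun k : 'I_(m + n) => (m <= k)%N)) => i j.
rewrite -[i]splitK -[j]splitK; case: (split i) => i'; case: (split j) => j' /=;
  rewrite ?block_mxEul ?block_mxEur ?block_mxEdl ?block_mxEdr ?mxE //=.
by rewrite leq_addr leqNgt ltn_ord.
Qed.

Ltac elemtac := repeat (first [apply: elem_U | apply: elem_L | apply: elem_mul]).
Ltac msimp := rewrite ?mulmx0 ?mul0mx ?mulmx1 ?mul1mx ?addr0 ?add0r ?mulmxN ?mulNmx ?opprK.

Definition cong n (X Y : 'M[R]_n) := exists E, elementary E /\ X = E^T *m Y *m E.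

Lemma cong_refl n (X : 'M[R]_n) : cong X X.
Proof. by exists 1%:M; split; [apply: elem1 | rewrite trmx1 mul1mx mulmx1]. Qed.

Lemma cong_trans n (X Y Z : 'M[R]_n) : cong X Y -> cong Y Z -> cong X Z.
Proof.
move=> [E [hE ->]] [F [hF ->]]; exists (F *m E); split; first exact: elem_mul.
by rewrite trmx_mul !mulmxA.
Qed.

Lemma cong_eq n (X Y : 'M[R]_n) : X = Y -> cong X Y.
Proof. by move=> ->; apply: cong_refl. Qed.

Lemma cong_perp m n (X X' : 'M[R]_m) (Y Y' : 'M[R]_n) :
  cong X X' -> cong Y Y' -> cong (perp X Y) (perp X' Y').
Proof.
move=> [E [hE ->]] [F [hF ->]]; exists (block_mx E 0 0 F); split; first exact: elem_block.
rewrite /perp tr_block_mx !trmx0 !mulmx_block ?mulmx0 ?mul0mx ?addr0 ?add0r.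
by rewrite !mul0mx.
Qed.

Lemma whitehead n (Y Yi : 'M[R]_n) : Y *m Yi = 1%:M -> Yi *m Y = 1%:M ->
  elementary (block_mx Y 0 0 Yi : 'M_(n + n)).
Proof.
move=> h1 h2.
have -> : block_mx Y 0 0 Yi =
  block_mx 1%:M Y 0 1%:M *m block_mx 1%:M 0 (- Yi) 1%:M *m block_mx 1%:M Y 0 1%:M *m
  block_mx 1%:M (-1%:M) 0 1%:M *m block_mx 1%:M 0 1%:M 1%:M *m block_mx 1%:M (-1%:M) 0 1%:M
  :> 'M_(n + n).
  rewrite !mulmx_block; do 3 msimp; rewrite h1 h2 subrr; do 3 msimp; rewrite ?oppr0 ?addr0 ?add0r.
  by rewrite !addNr ?addr0 ?addNr ?oppr0 ?add0r.
by elemtac.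
Qed.

Definition swapm n : 'M[R]_(n + n) := block_mx 0 1%:M (-1%:M) 0.

Lemma elem_swap n : elementary (swapm n).
Proof.
have -> : swapm n = block_mx 1%:M 1%:M 0 1%:M *m block_mx 1%:M 0 (-1%:M) 1%:M *m block_mx 1%:M 1%:M 0 1%:M.
  rewrite /swapm !mulmx_block !mulmx0 !mul0mx !mulmx1 !mul1mx !addr0 !add0r.
  by rewrite addrN addNr add0r.
by elemtac.
Qed.

Lemma cong_swap n (X Y : 'M[R]_n) : cong (perp X Y) (perp Y X).
Proof.
exists (swapm n); split; first exact: elem_swap.
rewrite /perp /swapm tr_block_mx !trmx0 trmx1 raddfN /= trmx1 !mulmx_block.
rewrite !mulmx0 !mul0mx !addr0 !add0r !mulmx1 !mul1mx !mulNmx !mulmxN !mulmx1 opprK.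
by rewrite mul1mx oppr0.
Qed.

Definition Hm n (M : 'M[R]_n) : 'M[R]_(n + n) := block_mx 0 M (- M^T) 0.

Lemma H_cong n (X Y M : 'M[R]_n) :
  Hm (X^T *m M *m Y) = (block_mx X 0 0 Y)^T *m Hm M *m block_mx X 0 0 Y.
Proof.
rewrite /Hm tr_block_mx !trmx0 !mulmx_block; msimp; rewrite ?mul0mx; msimp.
by rewrite !trmx_mul trmxK !mulmxA.
Qed.

Lemma cong_H n (X Y M : 'M[R]_n) : elementary X -> elementary Y ->
  cong (Hm (X^T *m M *m Y)) (Hm M).
Proof. by move=> hX hY; exists (block_mx X 0 0 Y); split; [apply: elem_block | apply: H_cong]. Qed.

Lemma smD n (x y : R) : (x + y)%:M = x%:M + y%:M :> 'M[R]_n.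
Proof. by apply/matrixP => i j; rewrite !mxE mulrnDl. Qed.

Lemma cong_HP n (J : 'M[R]_n) (x u : R) : J^T = - J -> x * x = -1 -> u + u = 1 ->
  cong (Hm (x *: J)) (perp J J).
Proof.
move=> hJ hx hu.
exists (block_mx 1%:M (x * u)%:M x%:M (1 - u)%:M); split.
  have -> : block_mx 1%:M (x * u)%:M x%:M (1 - u)%:M =
     block_mx 1%:M 0 x%:M 1%:M *m block_mx 1%:M (x * u)%:M 0 1%:M :> 'M[R]_(n + n).
    rewrite mulmx_block; msimp; congr block_mx.
    by rewrite -scalar_mxM -smD; congr (_%:M); rewrite mulrA hx; ring.
  by elemtac.
rewrite /Hm /perp tr_block_mx !tr_scalar_mx !mulmx_block; msimp; rewrite ?mul0mx; msimp.
rewrite !mul_scalar_mx !mul_mx_scalar !scalerA -!scalerDl.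
rewrite linearZ /= hJ scalerN opprK.
have hu' : 1 - u = u by rewrite -hu addrK.
rewrite hu' hx scaleN1r addrN.
congr block_mx.
- by rewrite (mulrC u x) -mulrDr hu mulr1.
- by rewrite -mulrDr hu mulr1.
have -> : x * u * (x * u) + u * u = (x * x + 1) * (u * u) by ring.
by rewrite hx addNr mul0r scale0r.
Qed.

Lemma elem_castmx m n (e : m = n) (A : 'M[R]_m) : elementary A -> elementary (castmx (e, e) A).
Proof. by case: n / e; rewrite castmx_id. Qed.

Lemma castmx_refl m (e1 e2 : m = m) (X : 'M[R]_m) : castmx (e1, e2) X = X.
Proof. by rewrite (eq_irrelevance e1 erefl) (eq_irrelevance e2 erefl) castmx_id. Qed.

Lemma whitehead3 n (D Di : 'M[R]_n) : D *m Di = 1%:M -> Di *m D = 1%:M ->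
  elementary (block_mx D 0 0 (block_mx Di 0 0 (1%:M : 'M_n))).
Proof.
move=> h1 h2.
have := @block_mxAx R n n n n n n D 0 0 0 Di 0 0 0 (1%:M : 'M[R]_n); rewrite /= !row_mx0 !col_mx0 => ->.
apply: elem_castmx; apply: elem_block; [exact: whitehead | exact: elem1].
Qed.

Lemma whitehead_step n (E D Di : 'M[R]_n) : D *m Di = 1%:M -> Di *m D = 1%:M ->
  cong (perp (D^T *m E *m D) (Hm 1%:M)) (perp E (Hm D^T)).
Proof.
move=> h1 h2; exists (block_mx D 0 0 (block_mx Di 0 0 1%:M)); split; first exact: whitehead3.
have hh : Hm 1%:M = (block_mx Di 0 0 1%:M)^T *m Hm D^T *m block_mx Di 0 0 1%:M.
  by rewrite -H_cong -trmx_mul h1 trmx1 mulmx1.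
rewrite hh; set K := block_mx Di 0 0 1%:M; set H := Hm D^T.
rewrite /perp tr_block_mx !trmx0 !mulmx_block; msimp; rewrite ?mul0mx; msimp.
by [].
Qed.

Lemma perpA44 (X Y Z : 'M[R]_4) : (perp X (perp Y Z) : 'M[R]_12) = (perp (perp X Y) Z : 'M[R]_12).
Proof.
have := @block_mxAx R 4 4 4 4 4 4 X 0 0 0 Y 0 0 0 Z; rewrite /= !row_mx0 !col_mx0 /perp => ->.
by rewrite castmx_refl.
Qed.

Lemma cong_rot (X Y Z : 'M[R]_4) :
  @cong 12 (perp X (perp Y Z)) (perp (perp Y Z) X).
Proof.
rewrite perpA44.
apply: (@cong_trans 12 _ (perp (perp Y X) Z)).
  apply: (@cong_perp (4 + 4) 4); [exact: cong_swap | exact: cong_refl].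
rewrite -perpA44 -[perp (perp Y Z) X]/(perp (perp Y Z) X : 'M[R]_12) -perpA44.
apply: (@cong_perp 4 (4 + 4)); [exact: cong_refl | exact: cong_swap].
Qed.
End Elem.
Ltac elemtac := repeat (first [apply: elem_U | apply: elem_L | apply: elem_mul]).
Ltac msimp := rewrite ?mulmx0 ?mul0mx ?mulmx1 ?mul1mx ?addr0 ?add0r ?mulmxN ?mulNmx ?opprK.

Ltac ent4 := let i := fresh "i" in let j := fresh "j" in
  apply/matrixP => i j; do 6 rewrite ?mxE ?big_ord_recr ?big_ord0 /=;
  case: i => [[|[|[|[|?]]]] ?] //; case: j => [[|[|[|[|?]]]] ?] //=.

Section C.
Variable R : comPzRingType.

Definition m4 (f : nat -> nat -> R) : 'M[R]_4 := \matrix_(i < 4, j < 4) f i j.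

Definition Dm (a b c A B C : R) : 'M[R]_4 := m4 (fun r s =>
  match r, s with
  | 0, 0 => 1
  | 1, 1 => a * a | 1, 2 => b | 1, 3 => c
  | 2, 1 => - b + a * C + a * C | 2, 2 => C * C | 2, 3 => - (B * C) - A
  | 3, 1 => - c - a * B - a * B | 3, 2 => A - B * C | 3, 3 => B * B
  | _, _ => 0 end).

Definition Dim (a b c A B C : R) : 'M[R]_4 :=
  let q1 := c + a * B in let q2 := a * C - b in
  m4 (fun r s =>
  match r, s with
  | 0, 0 => 1
  | 1, 1 => A * A | 1, 2 => A * q1 - B | 1, 3 => A * q2 - C
  | 2, 1 => q1 * A + B | 2, 2 => q1 * q1 | 2, 3 => q1 * q2 + a
  | 3, 1 => q2 * A + C | 3, 2 => q2 * q1 - a | 3, 3 => q2 * q2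
  | _, _ => 0 end).

Definition E1m : 'M[R]_4 := vmat 1 0 0 1 0 0.

Lemma J2_eq (a b c A B C : R) : a * A = 1 - b * B - c * C ->
  vmat (a ^+ 2) b c (A * A) (A * (c + a * B) + B) (A * (a * C - b) + C)
  = (Dm a b c A B C)^T *m E1m *m Dm a b c A B C.
Proof. move=> h; ent4; ring: h. Qed.

Lemma DDi (a b c A B C : R) : a * A = 1 - b * B - c * C ->
  Dm a b c A B C *m Dim a b c A B C = 1%:M.
Proof. move=> h; ent4; ring: h. Qed.

Lemma DiD (a b c A B C : R) : a * A = 1 - b * B - c * C ->
  Dim a b c A B C *m Dm a b c A B C = 1%:M.
Proof. move=> h; ent4; ring: h. Qed.


Definition C1m (p0 p1 p2 : R) : 'M[R]_4 := 1%:M + m4 (fun r s =>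
  match r, s with 0, 1 => p0 | 0, 2 => p1 | 0, 3 => p2 | _, _ => 0 end).
Definition R1T (q0 q1 q2 : R) : 'M[R]_4 := 1%:M + m4 (fun r s =>
  match r, s with 1, 0 => q0 | 2, 0 => q1 | 3, 0 => q2 | _, _ => 0 end).
Definition R2T (p0 p1 p2 : R) : 'M[R]_4 := 1%:M + m4 (fun r s =>
  match r, s with 0, 1 => - p0 | 0, 2 => - p1 | 0, 3 => - p2 | _, _ => 0 end).

Lemma DT_eq (a b c A B C x : R) : a * A = 1 - b * B - c * C -> x * x = -1 ->
  (Dm a b c A B C)^T = (x *: C1m a C (- B))^T *m (x *: vmat a C (- B) A (c + a * B) (a * C - b))
     *m (R1T A (c + a * B) (a * C - b) *m R2T a C (- B)).
Proof. move=> h hx; ent4; ring: h hx. Qed.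

Definition Fm (a : R) : 'M[R]_4 := m4 (fun i j =>
  match i, j with 0, 1 => -1 | 1, 0 => 1 | 1, 1 => a | 2, 2 => 1 | 3, 3 => 1 | _, _ => 0 end).

Lemma F_cong (a b c A B C : R) :
  vmat a C (-B) A (c + a * B) (a * C - b) = (Fm a)^T *m vmat a b c A B C *m Fm a.
Proof. ent4; ring. Qed.

Lemma E1_eq (x : R) : x * x = -1 -> E1m = (x%:M)^T *m psi R 4 *m x%:M.
Proof. move=> hx; ent4; ring: hx. Qed.


Lemma elem_C1m (p0 p1 p2 : R) : elementary (C1m p0 p1 p2).
Proof.
apply: (@elem_unip _ _ _ (fun k : 'I_4 => nat_of_ord k == 0%N)) => i j.
rewrite mxE; case: i => [[|[|[|[|?]]]] ?] //; case: j => [[|[|[|[|?]]]] ?] //.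
Qed.

Lemma elem_R1T (q0 q1 q2 : R) : elementary (R1T q0 q1 q2).
Proof.
apply: (@elem_unip _ _ _ (fun k : 'I_4 => nat_of_ord k != 0%N)) => i j.
rewrite mxE; case: i => [[|[|[|[|?]]]] ?] //; case: j => [[|[|[|[|?]]]] ?] //.
Qed.

Lemma elem_R2T (p0 p1 p2 : R) : elementary (R2T p0 p1 p2).
Proof.
apply: (@elem_unip _ _ _ (fun k : 'I_4 => nat_of_ord k == 0%N)) => i j.
rewrite mxE; case: i => [[|[|[|[|?]]]] ?] //; case: j => [[|[|[|[|?]]]] ?] //.
Qed.

Definition o4 (k : nat) (h : (k < 4)%N) : 'I_4 := Ordinal h.

Lemma elem_F (a : R) : elementary (Fm a).
Proof.
have -> : Fm a = (1%:M + (-1) *: delta_mx (o4 (isT : (0 < 4)%N)) (o4 (isT : (1 < 4)%N)))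
  *m (1%:M + 1 *: delta_mx (o4 (isT : (1 < 4)%N)) (o4 (isT : (0 < 4)%N)))
  *m (1%:M + (-1) *: delta_mx (o4 (isT : (0 < 4)%N)) (o4 (isT : (1 < 4)%N)))
  *m (1%:M + a *: delta_mx (o4 (isT : (0 < 4)%N)) (o4 (isT : (1 < 4)%N))).
  ent4; ring.
by repeat apply: elem_mul; apply: elem_T.
Qed.


Lemma elem_x4 (x : R) : x * x = -1 -> elementary (x%:M : 'M[R]_4).
Proof.
move=> hx.
have e : (x%:M : 'M[R]_4) = (block_mx (x%:M : 'M_2) 0 0 ((-x)%:M) *m block_mx 1%:M 0 0 ((-1)%:M) : 'M_(2+2)).
  rewrite mulmx_block; msimp; rewrite -scalar_mxM mulrN1 opprK.
  exact: (scalar_mx_block 2 2 x).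
rewrite e; apply: elem_mul.
  by apply: (@whitehead _ 2); rewrite -scalar_mxM ?mulrN ?mulNr hx opprK.
apply: (@elem_block _ 2 2); first exact: elem1.
rewrite (scalar_mx_block 1 1 (-1)).
by apply: (@whitehead _ 1); rewrite -scalar_mxM mulrN1 opprK.
Qed.

End C.

Section C2.
Variable R : comPzRingType.

Lemma psi8 : (psi R 8 : 'M[R]_(4 + 4)) = perp (psi R 4) (psi R 4).
Proof.
apply/matrixP => i j; rewrite /perp -[i]splitK -[j]splitK.
case: (split i) => i'; case: (split j) => j' /=;
  rewrite ?block_mxEul ?block_mxEur ?block_mxEdl ?block_mxEdr !mxE /=;
  case: i' => [[|[|[|[|?]]]] ?] //; case: j' => [[|[|[|[|?]]]] ?] //.
Qed.

Definition Ym : 'M[R]_4 := m4 (fun r s => match r, s with 0, 1 => 1 | 2, 3 => 1 | _, _ => 0 end).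
Definition Pim (x : R) : 'M[R]_(4 + 4) :=
  block_mx 1%:M (x *: psi R 4) Ym (Ym^T *m (x *: psi R 4)).

Lemma elem_Pi (x : R) : x * x = -1 -> elementary (Pim x).
Proof.
move=> hx.
have -> : Pim x = block_mx 1%:M 0 Ym 1%:M *m block_mx 1%:M 0 0 x%:M *m block_mx 1%:M (x *: psi R 4) 0 1%:M.
  rewrite /Pim !mulmx_block; msimp; rewrite ?mul0mx; msimp.
  congr block_mx; ent4; ring: hx.
apply: elem_mul; [apply: elem_mul|].
- exact: elem_L.
- by apply: elem_block; [exact: elem1 | exact: elem_x4].
- exact: elem_U.
Qed.

Lemma Pi_cong (x : R) : x * x = -1 -> perp (psi R 4) (psi R 4) = (Pim x)^T *m Hm 1%:M *m Pim x.
Proof.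
move=> hx.
rewrite /Pim /Hm /perp tr_block_mx trmx1 !mulmx_block; msimp; rewrite ?mul0mx; msimp.
congr block_mx; ent4; ring: hx.
Qed.


Lemma vmat_change (v0 v1 v2 w0 w1 w2 u0 u1 u2 : R) :
  v0 * w0 + v1 * w1 + v2 * w2 = 1 -> v0 * u0 + v1 * u1 + v2 * u2 = 1 ->
  cong (vmat v0 v1 v2 u0 u1 u2) (vmat v0 v1 v2 w0 w1 w2).
Proof.
move=> hw hu.
set d0 := u0 - w0; set d1 := u1 - w1; set d2 := u2 - w2.
set x0 := w1 * d2 - w2 * d1; set x1 := w2 * d0 - w0 * d2; set x2 := w0 * d1 - w1 * d0.
have U : vmat v0 v1 v2 u0 u1 u2 =
   vmat v0 v1 v2 (w0 - (v1 * x2 - v2 * x1)) (w1 - (v2 * x0 - v0 * x2)) (w2 - (v0 * x1 - v1 * x0)).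
  have hd : v0 * d0 + v1 * d1 + v2 * d2 = 0.
    rewrite /d0 /d1 /d2.
    transitivity ((v0 * u0 + v1 * u1 + v2 * u2) - (v0 * w0 + v1 * w1 + v2 * w2)); first ring.
    by rewrite hu hw subrr.
  congr (vmat _ _ _ _ _ _).
  - have -> : w0 - (v1 * x2 - v2 * x1) = w0 - w0 * (v0 * d0 + v1 * d1 + v2 * d2) + d0 * (v0 * w0 + v1 * w1 + v2 * w2)
      by rewrite /x1 /x2; ring.
    by rewrite hd hw /d0; ring.
  - have -> : w1 - (v2 * x0 - v0 * x2) = w1 - w1 * (v0 * d0 + v1 * d1 + v2 * d2) + d1 * (v0 * w0 + v1 * w1 + v2 * w2)
      by rewrite /x0 /x2; ring.
    by rewrite hd hw /d1; ring.
  - have -> : w2 - (v0 * x1 - v1 * x0) = w2 - w2 * (v0 * d0 + v1 * d1 + v2 * d2) + d2 * (v0 * w0 + v1 * w1 + v2 * w2)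
      by rewrite /x0 /x1; ring.
    by rewrite hd hw /d2; ring.
exists (C1m x0 x1 x2); split; first exact: elem_C1m.
rewrite U; clearbody x0 x1 x2; ent4; ring.
Qed.

End C2.

Lemma vmat_tr (R : comPzRingType) (a b c A B C : R) : (vmat a b c A B C)^T = - vmat a b c A B C.
Proof. ent4; ring. Qed.

Theorem lemma5p2 (R : comPzRingType)
  (two_unit : exists u : R, 2 * u = 1)
  (minus1_square : exists i : R, i * i = -1)
  (a b c : R)
  (unimod : exists x y z : R, a * x + b * y + c * z = 1)
  (a' b' c' : R) (h1 : a * a' + b * b' + c * c' = 1)
  (a'' b'' c'' : R) (h2 : a ^+ 2 * a'' + b * b'' + c * c'' = 1) :
  WE_equiv (vmat (a ^+ 2) b c a'' b'' c'')
           (perp (vmat a b c a' b' c') (vmat a b c a' b' c')).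
Proof.
case: two_unit => u hu2; case: minus1_square => x hx.
have hu : u + u = 1 by rewrite -hu2 mulrDl mul1r.
have h : a * a' = 1 - b * b' - c * c'.
  by rewrite -h1; ring.
set q1 := c + a * b'; set q2 := a * c' - b.
set Jv := vmat a b c a' b' c'.
set Jp := vmat a c' (- b') a' q1 q2.
set D := Dm a b c a' b' c'; set Di := Dim a b c a' b' c'.
have main : @cong R 12 (perp (vmat (a ^+ 2) b c a'' b'' c'') (psi R 8)) (perp (perp Jv Jv) (psi R 4)).
  apply: (@cong_trans _ 12 _ (perp (vmat (a ^+ 2) b c (a' * a') (a' * q1 + b') (a' * q2 + c')) (psi R 8))).
    apply: (@cong_perp _ 4 8); last exact: cong_refl.
    apply: vmat_change => //.
    rewrite /q1 /q2; ring: h.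
  rewrite psi8.
  apply: (@cong_trans _ 12 _ (perp (vmat (a ^+ 2) b c (a' * a') (a' * q1 + b') (a' * q2 + c')) (Hm (1%:M : 'M[R]_4)))).
    apply: (@cong_perp _ 4 8); first exact: cong_refl.
    by exists (Pim x); split; [exact: elem_Pi | exact: Pi_cong].
  rewrite /q1 /q2 (J2_eq h).
  apply: (@cong_trans _ 12 _ (perp (E1m R) (Hm D^T))).
    by apply: (@whitehead_step _ 4); [exact: DDi | exact: DiD].
  apply: (@cong_trans _ 12 _ (perp (E1m R) (Hm (x *: Jp)))).
    apply: (@cong_perp _ 4 8); first exact: cong_refl.
    rewrite /D (DT_eq h hx).
    apply: (@cong_H _ 4).
      by rewrite -mul_scalar_mx; apply: elem_mul; [exact: elem_x4 | exact: elem_C1m].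
    by apply: elem_mul; [exact: elem_R1T | exact: elem_R2T].
  apply: (@cong_trans _ 12 _ (perp (E1m R) (perp Jp Jp))).
    apply: (@cong_perp _ 4 8); first exact: cong_refl.
    by apply: (@cong_HP _ 4 Jp x u) => //; exact: vmat_tr.
  have hF : cong Jp Jv by exists (Fm a); split; [exact: elem_F | exact: F_cong].
  apply: (@cong_trans _ 12 _ (perp (E1m R) (perp Jv Jv))).
    apply: (@cong_perp _ 4 8); first exact: cong_refl.
    exact: (@cong_perp _ 4 4).
  apply: (@cong_trans _ 12 _ (perp (perp Jv Jv) (E1m R))); first exact: cong_rot.
  apply: (@cong_perp _ 8 4); first exact: cong_refl.
  by exists (x%:M); split; [exact: elem_x4 | exact: E1_eq].
case: main => E [hE hEq].
exists 0%N, E; split => //.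
rewrite !castmx_refl.
exact: hEq.
Qed.
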